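(* Consider the system $x_{t+1} = A_t x_t + B_t u_t + w_t$ over horizon $T$ with stacked vectors $\mathbf{x} = (x_0,\dots,x_{T-1})$, $\mathbf{u} = (u_0,\dots,u_{T-1})$, $\mathbf{w} = (x_0,w_0,\dots,w_{T-2})$, so that $\mathbf{x} = \mathbf{F}\mathbf{u} + \mathbf{G}\mathbf{w}$ with $\mathbf{F} = (\mathbf{I}-\mathbf{Z}\mathbf{A})^{-1}\mathbf{Z}\mathbf{B}$, $\mathbf{G} = (\mathbf{I}-\mathbf{Z}\mathbf{A})^{-1}$. Let $\mathbf{Q}\succeq 0$, $\mathbf{R}\succ 0$, $J(\bm{\pi},\mathbf{w}) = \mathbf{x}^\top\mathbf{Q}\mathbf{x} + \mathbf{u}^\top\mathbf{R}\mathbf{u}$, and let $\bm{\psi}^\star$ be the unconstrained clairvoyant optimal policy, $\mathbf{u}_{\psi^\star} = -(\mathbf{R}+\mathbf{F}^\top\mathbf{Q}\mathbf{F})^{-1}\mathbf{F}^\top\mathbf{Q}\mathbf{G}\mathbf{w}$, $\mathbf{x}_{\psi^\star} = \mathbf{F}\mathbf{u}_{\psi^\star}+\mathbf{G}\mathbf{w}$. Assume $\mathbf{w}$ is random with distribution $\mathcal{D}$ having mean $\bm{\mu}_\mathbf{w}$ and covariance $\Sigma_\mathbf{w}\succeq 0$. Then, over linear control policies $\bm{\pi}$ (causal linear state feedback $\mathbf{u}=\mathbf{K}\mathbf{x}$ with $\mathbf{K}$ block lower-triangular), the set of minimizers of $$\mathbb{E}\big[(\mathbf{x}-\mathbf{x}_{\psi^\star})^\top\mathbf{Q}(\mathbf{x}-\mathbf{x}_{\psi^\star})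 + (\mathbf{u}-\mathbf{u}_{\psi^\star})^\top\mathbf{R}(\mathbf{u}-\mathbf{u}_{\psi^\star})\big]$$ coincides with $\operatorname{argmin}_{\bm{\pi}} \mathbb{E}[J(\bm{\pi},\mathbf{w})]$.
   Context: $\mathbf{Z}$ is the block-downshift matrix (identity blocks on the first block sub-diagonal, zeros elsewhere), $\mathbf{A} = \operatorname{blkdiag}(A_0,\dots,A_{T-2},0_{n\times n})$, $\mathbf{B} = \operatorname{blkdiag}(B_0,\dots,B_{T-2},0_{n\times m})$. $\mathbf{x},\mathbf{u}$ denote the closed-loop trajectories under $\bm{\pi}$ driven by $\mathbf{w}$; expectations are with respect to $\mathbf{w}\sim\mathcal{D}$. *)

(* Defs.v *)
From HB Require Import structures.
From mathcomp Require Import all_boot all_order all_algebra.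
From mathcomp Require Import all_classical all_reals all_analysis.
Set Implicit Arguments. Unset Strict Implicit. Unset Printing Implicit Defensive.
Import Order.TTheory GRing.Theory Num.Theory.
Local Open Scope ring_scope.

Section FiniteHorizonLQ.
Variables (R : realType) (T n m : nat).
(* stacked dimensions: state/disturbance space R^{nT}, input space R^{mT},
   each organised in T blocks (one per time step) *)
Local Notation NX := (\sum_(t < T) n)%N.
Local Notation NU := (\sum_(t < T) m)%N.

Variables (As : nat -> 'M[R]_n) (Bs : nat -> 'M[R]_(n, m)).

Definition Zmx : 'M[R]_NX :=
  \mxblock_(i < T, j < T) (if i == j.+1 :> nat then 1%:M else 0 : 'M[R]_(n, n)).

Definition Amx : 'M[R]_NX :=
  \mxblock_(i < T, j < T)
    (if (i == j) && (i < T.-1)%N then As i else 0 : 'M[R]_(n, n)).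

Definition Bmx : 'M[R]_(NX, NU) :=
  \mxblock_(i < T, j < T)
    (if (i == j) && (i < T.-1)%N then Bs i else 0 : 'M[R]_(n, m)).

Definition Gmx : 'M[R]_NX := invmx (1%:M - Zmx *m Amx).
Definition Fmx : 'M[R]_(NX, NU) := Gmx *m Zmx *m Bmx.

Definition causal (K : 'M[R]_(NU, NX)) : Prop :=
  forall i j : 'I_T, (i < j)%N ->
    @submxblock R T T (fun _ => m) (fun _ => n) K i j = 0.

(* closed-loop trajectories of u = K x, x = F u + G w *)
Definition xcl (K : 'M[R]_(NU, NX)) (w : 'cV[R]_NX) : 'cV[R]_NX :=
  invmx (1%:M - Fmx *m K) *m Gmx *m w.
Definition ucl (K : 'M[R]_(NU, NX)) (w : 'cV[R]_NX) : 'cV[R]_NU :=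
  K *m xcl K w.

Definition quad k (M : 'M[R]_k) (v : 'cV[R]_k) : R := (v^T *m M *m v) 0 0.

Definition ustar (Q : 'M[R]_NX) (Rc : 'M[R]_NU) (w : 'cV[R]_NX) : 'cV[R]_NU :=
  - (invmx (Rc + Fmx^T *m Q *m Fmx) *m Fmx^T *m Q *m Gmx *m w).
Definition xstar (Q : 'M[R]_NX) (Rc : 'M[R]_NU) (w : 'cV[R]_NX) : 'cV[R]_NX :=
  Fmx *m ustar Q Rc w + Gmx *m w.

Definition Jcost (Q : 'M[R]_NX) (Rc : 'M[R]_NU) K w : R :=
  quad Q (xcl K w) + quad Rc (ucl K w).

Definition Dcost (Q : 'M[R]_NX) (Rc : 'M[R]_NU) K w : R :=
  quad Q (xcl K w - xstar Q Rc w) + quad Rc (ucl K w - ustar Q Rc w).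

Definition argmin_causal (f : 'M[R]_(NU, NX) -> \bar R) : set 'M[R]_(NU, NX) :=
  [set K | causal K /\ forall K', causal K' -> (f K <= f K')%E].

End FiniteHorizonLQ.

Definition psd (R : realType) k (M : 'M[R]_k) : Prop :=
  M^T = M /\ forall v : 'cV[R]_k, 0 <= quad M v.
Definition pd (R : realType) k (M : 'M[R]_k) : Prop :=
  M^T = M /\ forall v : 'cV[R]_k, v != 0 -> 0 < quad M v.

(* Main.v *)
Require Import Defs.
From HB Require Import structures.
From mathcomp Require Import all_boot all_order all_algebra.
From mathcomp Require Import all_classical all_reals all_analysis measurable_realfun.
From mathcomp Require Import zify ring lra.
Import Order.TTheory GRing.Theory Num.Theory.
Local Open Scope ring_scope.

Section Shift.
Variables (R : realType) (T : nat).

Definition shiftP (p_ q_ : 'I_T -> nat) (s : nat)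
  (M : 'M[R]_((\sum_i p_ i)%N, (\sum_i q_ i)%N)) :=
  forall i j : 'I_T, (i < j + s)%N -> @submxblock R T T p_ q_ M i j = 0.

Arguments shiftP {p_ q_}.

Lemma shift_mul (p_ q_ r_ : 'I_T -> nat) s1 s2 (A : 'M[R]_((\sum_i p_ i)%N, (\sum_i q_ i)%N))
   (B : 'M[R]_((\sum_i q_ i)%N, (\sum_i r_ i)%N)) :
  shiftP s1 A -> shiftP s2 B -> shiftP (s1 + s2) (A *m B).
Proof.
move=> hA hB i k hik.
rewrite -(submxblockK A) -(submxblockK B) mul_mxblock mxblockK.
apply: big1 => j _; case: (ltnP i (j + s1)) => h.
  by rewrite hA // mul0mx.
by rewrite (hB j k) ?mulmx0 //; lia.
Qed.

Lemma shift_weak (p_ q_ : 'I_T -> nat) s s' (M : 'M[R]_((\sum_i p_ i)%N, (\sum_i q_ i)%N)) :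
  (s' <= s)%N -> shiftP s M -> shiftP s' M.
Proof. by move=> hs hM i j h; apply: hM; lia. Qed.

Lemma shift0 (p_ q_ : 'I_T -> nat) s : shiftP s (0 : 'M[R]_((\sum_i p_ i)%N, (\sum_i q_ i)%N)).
Proof. by move=> i j _; rewrite submxblock0. Qed.

Lemma shiftD p_ q_ s (A B : 'M[R]_((\sum_i p_ i)%N, (\sum_i q_ i)%N)) :
  shiftP s A -> shiftP s B -> shiftP s (A + B).
Proof. by move=> hA hB i j h; rewrite submxblockD hA ?hB ?addr0. Qed.

Lemma shiftN p_ q_ s (A : 'M[R]_((\sum_i p_ i)%N, (\sum_i q_ i)%N)) :
  shiftP s A -> shiftP s (- A).
Proof. by move=> hA i j h; rewrite submxblockN hA ?oppr0. Qed.

Lemma shift_sum (p_ q_ : 'I_T -> nat) s k (F : 'I_k -> 'M[R]_((\sum_i p_ i)%N, (\sum_i q_ i)%N)) :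
  (forall l, shiftP s (F l)) ->
  shiftP s ((\sum_(l < k) F l)%R : 'M[R]_((\sum_i p_ i)%N, (\sum_i q_ i)%N)).
Proof.
move=> hF; apply: (big_ind (shiftP s)) => //; [exact: shift0 | exact: shiftD].
Qed.

Lemma shift1 (p_ : 'I_T -> nat) : shiftP 0 (1%:M : 'M[R]_((\sum_i p_ i)%N)).
Proof.
move=> i j; rewrite addn0 => h; apply/matrixP => a b.
rewrite !mxE; case: eqP => // /(congr1 (@tagnat.sig1 _ p_)).
by rewrite !tagnat.Rank1K => e; move: h; rewrite e ltnn.
Qed.

Lemma shift_full (p_ q_ : 'I_T -> nat) s (M : 'M[R]_((\sum_i p_ i)%N, (\sum_i q_ i)%N)) :
  (T <= s)%N -> shiftP s M -> M = 0.
Proof.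
move=> hs hM; apply/mxblockP => i j; rewrite submxblock0 hM //.
have := ltn_ord i; lia.
Qed.


Definition mxpow k (N : 'M[R]_k) j := iter j (mulmx N) 1%:M.
Arguments mxpow {k}.

Lemma shift_pow (p_ : 'I_T -> nat) s (N : 'M[R]_((\sum_i p_ i)%N)) j :
  shiftP s N -> shiftP (s * j) (mxpow N j).
Proof.
move=> hN; elim: j => [|j IH]; first by rewrite muln0; exact: shift1.
by rewrite mulnS; exact: shift_mul.
Qed.

Lemma telescope k (N : 'M[R]_k) K :
  (1%:M - N) *m (\sum_(j < K) mxpow N j) = 1%:M - mxpow N K.
Proof.
elim: K => [|K IH]; first by rewrite big_ord0 mulmx0 /= subrr.
rewrite big_ord_recr /= mulmxDr IH mulmxBl mul1mx.
by rewrite addrA subrK.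
Qed.

Lemma nil_unit (p_ : 'I_T -> nat) (N : 'M[R]_((\sum_i p_ i)%N)) :
  shiftP 1 N -> (1%:M - N) \in unitmx /\ shiftP 0 (invmx (1%:M - N)).
Proof.
move=> hN.
have e : (1%:M - N) *m (\sum_(j < T) mxpow N j) = 1%:M.
  rewrite telescope (@shift_full _ _ (1 * T)%N (mxpow N T)) ?subr0 //.
    by rewrite mul1n.
  exact: shift_pow.
have [u _] := mulmx1_unit e; split => //.
have -> : invmx (1%:M - N) = \sum_(j < T) mxpow N j.
  by rewrite -[RHS](mulKmx u) e mulmx1.
apply: shift_sum => j; apply: (@shift_weak _ _ (1 * j)%N) => //.
exact: shift_pow.
Qed.

End Shift.
Section Sys.
Variables (R : realType) (T n m : nat).
Variables (As : nat -> 'M[R]_n) (Bs : nat -> 'M[R]_(n, m)).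
Let pn : 'I_T -> nat := fun _ => n.
Let pm : 'I_T -> nat := fun _ => m.

Lemma Z_shift : @shiftP R T pn pn 1 (Zmx R T n).
Proof.
move=> i j h; rewrite /Zmx mxblockK.
by case: eqP => // e; move: h; rewrite e addn1 ltnn.
Qed.

Lemma A_shift : @shiftP R T pn pn 0 (Amx T As).
Proof.
move=> i j h; rewrite /Amx mxblockK.
by case: eqP => //= e; move: h; rewrite e addn0 ltnn.
Qed.

Lemma B_shift : @shiftP R T pn pm 0 (Bmx T Bs).
Proof.
move=> i j h; rewrite /Bmx mxblockK.
by case: eqP => //= e; move: h; rewrite e addn0 ltnn.
Qed.

Lemma G_unit : (1%:M - Zmx R T n *m Amx T As) \in unitmx /\
   @shiftP R T pn pn 0 (Gmx T As).
Proof.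
apply: nil_unit; rewrite -[1%N]addn0.
exact: shift_mul Z_shift A_shift.
Qed.

Lemma F_shift : @shiftP R T pn pm 1 (Fmx T As Bs).
Proof.
rewrite /Fmx -[1%N]/(0 + 1 + 0)%N.
apply: shift_mul; last exact: B_shift.
apply: shift_mul; last exact: Z_shift.
exact: G_unit.2.
Qed.

Lemma FK_unit (K : 'M[R]_(\sum_(t < T) m, \sum_(t < T) n)) :
  causal K -> (1%:M - Fmx T As Bs *m K) \in unitmx.
Proof.
move=> hK.
have h : @shiftP R T pn pn 1 (Fmx T As Bs *m K).
  rewrite -[1%N]addn0; apply: shift_mul; first exact: F_shift.
  by move=> i j; rewrite addn0; apply: hK.
by case: (@nil_unit R T pn _ h).
Qed.

End Sys.
Lemma add00 (R : realType) k (A B : 'M[R]_(1, k)) (j : 'I_k) :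
  (A + B) 0 j = A 0 j + B 0 j.
Proof. by rewrite mxE. Qed.

Lemma quadD (R : realType) k (M : 'M[R]_k) x y : M^T = M ->
  quad M (x + y) = quad M x + quad M y + 2 * (x^T *m M *m y) 0 0.
Proof.
move=> hM.
have hadd : forall A B : 'M[R]_1, (A + B) 0 0 = A 0 0 + B 0 0.
  by move=> A B; rewrite mxE.
have e : (y^T *m M *m x) 0 0 = (x^T *m M *m y) 0 0.
  have -> : (y^T *m M *m x) 0 0 = ((y^T *m M *m x)^T) 0 0 by rewrite [RHS]mxE.
  by rewrite !trmx_mul trmxK hM mulmxA.
rewrite /quad [(x + y)^T]linearD /= !mulmxDl !mulmxDr !hadd e.
lra.
Qed.

Lemma split_abs (R : realType) N1 N2 (F : 'M[R]_(N1, N2)) (Q : 'M[R]_N1)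
  (Rc : 'M[R]_N2) (a us : 'cV[R]_N2) (xs g : 'cV[R]_N1) :
  Q^T = Q -> Rc^T = Rc ->
  (Rc + F^T *m Q *m F) *m us = - (F^T *m Q *m g) -> xs = F *m us + g ->
  quad Q (F *m a + xs) + quad Rc (a + us) =
  quad Q (F *m a) + quad Rc a + (quad Q xs + quad Rc us).
Proof.
move=> hQ hR hu hx; rewrite (@quadD _ _ Q _ _ hQ) (@quadD _ _ Rc _ _ hR).
have hX : ((F *m a)^T *m Q *m xs) 0 0 + (a^T *m Rc *m us) 0 0 = 0.
  rewrite -add00.
  have -> : (F *m a)^T *m Q *m xs + a^T *m Rc *m us =
      a^T *m ((Rc + F^T *m Q *m F) *m us + F^T *m Q *m g).
    rewrite hx trmx_mul !mulmxDr !mulmxDl !mulmxA.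
    by rewrite mulmxDr !mulmxA addrAC; congr (_ + _); rewrite addrC.
  by rewrite hu addNr mulmx0 mxE.
lra.
Qed.

Lemma inv_aux (R : realType) N1 N2 (H : 'M[R]_N2) (A : 'M[R]_(N2, N1))
  (B C : 'M[R]_N1) (w : 'cV[R]_N1) : H \in unitmx ->
  H *m - (invmx H *m A *m B *m C *m w) = - (A *m B *m (C *m w)).
Proof. by move=> u; rewrite mulmxN !mulmxA mulmxV // mul1mx. Qed.

Lemma xcl_aux (R : realType) N1 N2 (F : 'M[R]_(N1, N2)) (K : 'M[R]_(N2, N1))
  (G : 'M[R]_N1) (w : 'cV[R]_N1) : (1%:M - F *m K) \in unitmx ->
  invmx (1%:M - F *m K) *m G *m w =
  F *m (K *m (invmx (1%:M - F *m K) *m G *m w)) + G *m w.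
Proof.
move=> u; set x := invmx _ *m G *m w.
have e : (1%:M - F *m K) *m x = G *m w by rewrite /x -!mulmxA mulKVmx.
rewrite mulmxBl mul1mx in e.
by rewrite -e mulmxA addrC subrK.
Qed.

Lemma sub_aux (R : realType) N (a b c : 'cV[R]_N) : (a + c) - (b + c) = a - b.
Proof. by rewrite opprD addrACA subrr addr0. Qed.

Section Alg.
Variables (R : realType) (T n m : nat).
Variables (As : nat -> 'M[R]_n) (Bs : nat -> 'M[R]_(n, m)).
Variables (Q : 'M[R]_(\sum_(t < T) n)) (Rc : 'M[R]_(\sum_(t < T) m)).
Hypotheses (hQ : Q^T = Q) (hR : Rc^T = Rc).
Hypothesis hH : (Rc + (Fmx T As Bs)^T *m Q *m Fmx T As Bs) \in unitmx.

Lemma J_split w v :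
  quad Q (Fmx T As Bs *m v + Gmx T As *m w) + quad Rc v =
  quad Q (Fmx T As Bs *m (v - ustar As Bs Q Rc w)) + quad Rc (v - ustar As Bs Q Rc w) +
  (quad Q (xstar As Bs Q Rc w) + quad Rc (ustar As Bs Q Rc w)).
Proof.
rewrite -(@split_abs R _ _ (Fmx T As Bs) Q Rc (v - ustar As Bs Q Rc w)
  (ustar As Bs Q Rc w) (xstar As Bs Q Rc w) (Gmx T As *m w)) //.
- rewrite (subrK (ustar As Bs Q Rc w) v); congr (quad Q _ + _).
  by rewrite /xstar mulmxBr addrA subrK.
- by rewrite /ustar; apply: inv_aux.
Qed.

Lemma JD K w : causal K ->
  Jcost As Bs Q Rc K w = Dcost As Bs Q Rc K w +
    (quad Q (xstar As Bs Q Rc w) + quad Rc (ustar As Bs Q Rc w)).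
Proof.
move=> hK.
have hx : xcl As Bs K w = Fmx T As Bs *m ucl As Bs K w + Gmx T As *m w.
  rewrite /ucl /xcl; exact: xcl_aux (@FK_unit R T n m As Bs K hK).
rewrite /Jcost /Dcost {1}hx J_split; congr (quad Q _ + _ + _).
by rewrite hx /xstar mulmxBr sub_aux.
Qed.

End Alg.
Lemma H_unit (R : realType) N1 N2 (F : 'M[R]_(N1, N2)) (Q : 'M[R]_N1)
  (Rc : 'M[R]_N2) : psd Q -> pd Rc -> (Rc + F^T *m Q *m F) \in unitmx.
Proof.
move=> [_ hQ] [_ hR]; rewrite unitmxE unitfE; apply/negP => /det0P [v nz hv].
have e : quad Rc v^T + quad Q (F *m v^T) = 0.
  rewrite /quad -add00 trmx_mul !trmxK.
  have h0 : v *m (Rc + F^T *m Q *m F) *m v^T = 0 by rewrite hv mul0mx.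
  rewrite mulmxDr mulmxDl !mulmxA in h0.
  by rewrite !mulmxA h0 mxE.
have h1 := hQ (F *m v^T).
have h2 : (0 < quad Rc (trmx v))%R by apply: hR; rewrite trmx_eq0.
move: e h1 h2; clear; set a := quad _ _; set b := quad _ _; lra.
Qed.

Local Open Scope ereal_scope.

Section Prob.
Variables (R : realType) (N : nat) (d : measure_display) (Omega : measurableType d).
Variable (P : probability Omega R) (w : Omega -> 'cV[R]_N).
Hypothesis mw : forall i, measurable_fun setT (fun om => w om i 0%R).
Hypothesis iw : forall i, P.-integrable setT (fun om => ((w om i 0%R) ^+ 2)%:E).

Lemma int_prod a b : P.-integrable setT (fun om => (w om a 0%R * w om b 0%R)%:E).
Proof.
apply: (@le_integrable _ _ _ P setT measurableT _
   (fun om => ((w om a 0%R) ^+ 2 + (w om b 0%R) ^+ 2)%:E)).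
- apply/measurable_EFinP; exact: measurable_funM.
- move=> om _; rewrite lee_fin.
  set x := w om a 0%R; set y := w om b 0%R.
  have h : (0 <= x ^+ 2 + y ^+ 2)%R by nra.
  rewrite (ger0_norm h) ler_norml; apply/andP; split; nra.
- apply: (eq_integrable measurableT _ _ _ (integrableD measurableT (iw a) (iw b))).
  by move=> om _; rewrite /= EFinD.
Qed.

Lemma int_quad k (M : 'M[R]_k) (L : 'M[R]_(k, N)) :
  P.-integrable setT (fun om => (quad M (L *m w om))%:E).
Proof.
set C := L^T *m M *m L.
have e : forall om, quad M (L *m w om) =
    (\sum_b \sum_a (C a b * (w om a 0%R * w om b 0%R)))%R.
  move=> om; rewrite /quad.
  have -> : (L *m w om)^T *m M *m (L *m w om) = (w om)^T *m C *m w om.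
    by rewrite /C trmx_mul !mulmxA.
  rewrite [in LHS]mxE.
  apply: eq_bigr => b _; rewrite mxE mulr_suml; apply: eq_bigr => a _.
  by rewrite mxE mulrAC mulrC.
apply: (eq_integrable measurableT (fun om => \sum_b \sum_a ((C a b)%:E * (w om a 0%R * w om b 0%R)%:E))) => //.
  by move=> om _; rewrite e -sumEFin; apply: eq_bigr => b _; rewrite -sumEFin.
apply: integrable_sum => // b _; apply: integrable_sum => // a _.
exact: (integrableZl measurableT (C a b) (int_prod a b)).
Qed.

End Prob.
Local Close Scope ereal_scope.

Theorem corollary4 (R : realType) (T n m : nat)
  (As : nat -> 'M[R]_n) (Bs : nat -> 'M[R]_(n, m))
  (Q : 'M[R]_(\sum_(t < T) n)) (Rc : 'M[R]_(\sum_(t < T) m))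
  (d : measure_display) (Omega : measurableType d) (P : probability Omega R)
  (w : Omega -> 'cV[R]_(\sum_(t < T) n)) :
  psd Q -> pd Rc ->
  (forall i, measurable_fun setT (fun om => w om i 0)) ->
  (forall i, P.-integrable setT (fun om => ((w om i 0) ^+ 2)%:E)) ->
  argmin_causal (fun K => 'E_P[fun om => Dcost As Bs Q Rc K (w om)])%E
  = argmin_causal (fun K => 'E_P[fun om => Jcost As Bs Q Rc K (w om)])%E.
Proof.
move=> hQ hR mw iw.
have sQ := hQ.1; have sR := hR.1.
have hH := @H_unit R _ _ (Fmx T As Bs) Q Rc hQ hR.
set F := Fmx T As Bs; set G := Gmx T As.
set Lu := - (invmx (Rc + F^T *m Q *m F) *m F^T *m Q *m G).
have eu : forall x, ustar As Bs Q Rc x = Lu *m x.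
  by move=> x; rewrite /Lu mulNmx.
have ex : forall x, xstar As Bs Q Rc x = (F *m Lu + G) *m x.
  by move=> x; rewrite /xstar eu mulmxDl mulmxA.
have i2 : forall k1 k2 (L1 : 'M[R]_(k1, _)) (M1 : 'M[R]_k1)
    (L2 : 'M[R]_(k2, _)) (M2 : 'M[R]_k2),
    P.-integrable setT (fun om => (quad M1 (L1 *m w om) + quad M2 (L2 *m w om))%:E).
  move=> k1 k2 L1 M1 L2 M2.
  apply: (eq_integrable measurableT _ _ _
    (integrableD measurableT (@int_quad R _ d Omega P w mw iw _ M1 L1) (@int_quad R _ d Omega P w mw iw _ M2 L2))).
  by move=> om _; rewrite /= EFinD.
set c := fun om => quad Q (xstar As Bs Q Rc (w om)) + quad Rc (ustar As Bs Q Rc (w om)).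
have ic : P.-integrable setT (fun om => (c om)%:E).
  apply: (eq_integrable measurableT _ _ _ (i2 _ _ (F *m Lu + G) Q Lu Rc)).
  by move=> om _; rewrite /c ex eu.
have iD : forall K, P.-integrable setT (fun om => (Dcost As Bs Q Rc K (w om))%:E).
  move=> K.
  set X := invmx (1%:M - F *m K) *m G.
  apply: (eq_integrable measurableT _ _ _
     (i2 _ _ (X - (F *m Lu + G)) Q (K *m X - Lu) Rc)).
  move=> om _; rewrite /Dcost ex eu /ucl /xcl -/F -/G -/X.
  by rewrite (mulmxBl X) (mulmxBl (K *m X)) (mulmxA K X).
have key : forall K, causal K ->
  ('E_P[fun om => Jcost As Bs Q Rc K (w om)] =
   'E_P[fun om => Dcost As Bs Q Rc K (w om)] + 'E_P[c])%E.
  move=> K cK; rewrite unlock.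
  rewrite -(integralD measurableT (iD K) ic).
  apply: eq_integral => om _.
  by rewrite (@JD R T n m As Bs Q Rc sQ sR hH K (w om) cK) EFinD.
have fc : ('E_P[c] \is a fin_num)%E.
  by rewrite unlock; exact: integrable_fin_num measurableT _ ic.
apply/seteqP; split => K [cK hK]; split => // K' cK'; have := hK K' cK'.
  by rewrite (key K cK) (key K' cK') leeD2rE.
by rewrite (key K cK) (key K' cK') leeD2rE.
Qed.
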